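(* Let $Q$ be any golden rectangle inscribed in the unit circle (i.e. with all four vertices on $\partial\mathbb{D}$). Then there is at least one ellipse $E$ inscribed in $Q$ such that $E$ is the Poncelet curve of a finite Blaschke product $B$ of degree $4$ with $B(0)=0$.
   Context: $\mathbb{D}$ is the open unit disc, $\partial\mathbb{D}$ the unit circle, and $\alpha=\frac{1+\sqrt5}{2}$. A golden rectangle is a rectangle whose longer side length divided by its shorter side length equals $\alpha$. A finite Blaschke product of degree $n$ is $B(z)=\beta\prod_{i=1}^n\frac{z-a_i}{1-\overline{a_i}z}$ with $|\beta|=1$, $|a_i|<1$. For such $B$ with $B(0)=0$ and each $\lambda\in\partial\mathbb{D}$, there are $n$ distinct points $z_1,\dots,z_n\in\partial\mathbb{D}$ with $B(z_j)=\lambda$; the Poncelet curve associated with $B$ is the (unique) curve in $\mathbb{D}$ which, for every $\lambda\in\partial\mathbb{D}$, is inscribed in (tangent to every side of) the polygon whose vertices are these $n$ points taken in order of argument, i.e. the envelope of the lines joining consecutive points of $B^{-1}(\lambda)$. *)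

(* Defs.v *)
From Stdlib Require Import Reals List.
From Coquelicot Require Import Coquelicot.
Import ListNotations.
Open Scope R_scope.

Definition alpha : R := (1 + sqrt 5) / 2.

Definition expi (t : R) : C := (cos t, sin t).

Fixpoint csum (n : nat) (f : nat -> C) : C :=
  match n with
  | O => RtoC 0
  | S k => Cplus (csum k f) (f k)
  end.

Definition in_polygon_hull (n : nat) (z : nat -> C) (w : C) : Prop :=
  exists mu : nat -> R,
    (forall j, (j < n)%nat -> 0 <= mu j) /\
    sum_f_R0 mu (pred n) = 1 /\
    w = csum n (fun j => Cmult (RtoC (mu j)) (z j)).

Definition on_segment (p q w : C) : Prop :=
  exists s : R, 0 <= s <= 1 /\ w = Cplus p (Cmult (RtoC s) (Cminus q p)).

(** The (convex) curve E is inscribed in the polygon with consecutive vertices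
    z 0, ..., z (n-1): it lies in the closed polygon and touches every side
    [z j, z (j+1 mod n)] (for a convex curve inside a convex polygon, touching
    a side is the same as being tangent to it). *)
Definition inscribed_in_polygon (E : C -> Prop) (n : nat) (z : nat -> C) : Prop :=
  (forall w, E w -> in_polygon_hull n z w) /\
  (forall j, (j < n)%nat -> exists w, E w /\ on_segment (z j) (z (S j mod n)%nat) w).

Definition is_ellipse (E : C -> Prop) : Prop :=
  exists (f1 f2 : C) (a : R),
    Cmod (Cminus f1 f2) < 2 * a /\
    forall w, E w <-> Cmod (Cminus w f1) + Cmod (Cminus w f2) = 2 * a.

Fixpoint blaschke_prod (l : list C) (z : C) : C :=
  match l with
  | [] => RtoC 1
  | a :: l' => Cmult (Cdiv (Cminus z a) (Cminus (RtoC 1) (Cmult (Cconj a) z)))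
                     (blaschke_prod l' z)
  end.

Definition blaschke (beta : C) (l : list C) (z : C) : C :=
  Cmult beta (blaschke_prod l z).

Definition is_blaschke_data (n : nat) (beta : C) (l : list C) : Prop :=
  length l = n /\ Cmod beta = 1 /\ List.Forall (fun a => Cmod a < 1) l.

Definition ordered_preimages (B : C -> C) (lambda : C) (n : nat) (z : nat -> C) : Prop :=
  exists t : nat -> R,
    (forall j, (S j < n)%nat -> t j < t (S j)) /\
    ((0 < n)%nat -> t (pred n) < t O + 2 * PI) /\
    (forall j, (j < n)%nat -> z j = expi (t j)) /\
    (forall w, (Cmod w = 1 /\ B w = lambda) <-> exists j, (j < n)%nat /\ w = z j).

Definition is_poncelet_curve (E : C -> Prop) (B : C -> C) (n : nat) : Prop :=
  (forall w, E w -> Cmod w < 1) /\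
  forall lambda : C, Cmod lambda = 1 ->
    exists z : nat -> C, ordered_preimages B lambda n z /\ inscribed_in_polygon E n z.

Definition quad (p1 p2 p3 p4 : C) (j : nat) : C :=
  match j with 0 => p1 | 1 => p2 | 2 => p3 | _ => p4 end%nat.

Definition inscribed_golden_rectangle (p1 p2 p3 p4 : C) : Prop :=
  Cmod p1 = 1 /\ Cmod p2 = 1 /\ Cmod p3 = 1 /\ Cmod p4 = 1 /\
  p1 <> p2 /\ p3 <> p2 /\
  Cminus p1 p2 = Cminus p4 p3 /\
  Re (Cmult (Cminus p1 p2) (Cconj (Cminus p3 p2))) = 0 /\
  (Cmod (Cminus p1 p2) = alpha * Cmod (Cminus p3 p2) \/
   Cmod (Cminus p3 p2) = alpha * Cmod (Cminus p1 p2)).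

(* Main.v *)
Require Import Defs.
From Stdlib Require Import Reals List Lra Lia Classical.
From Coquelicot Require Import Coquelicot.
Import ListNotations.
Open Scope R_scope.

Definition r2f g1 g2 := g1^2+g2^2.
Definition b2f g1 g2 := (1 - r2f g1 g2)/2.
Definition Af g1 g2 := (1 + r2f g1 g2)/2.
Definition Qf g1 g2 w1 w2 := Af g1 g2 * (w1^2+w2^2) - (w1*g1+w2*g2)^2.
Definition Rrel g1 g2 u1 u2 v1 v2 :=
  u1*v1+u2*v2 = (g1^2-g2^2)*(u1*v1-u2*v2) + (2*g1*g2)*(u1*v2+u2*v1).

Lemma unit_angle x y : x^2+y^2 = 1 -> exists t, x = cos t /\ y = sin t.
Proof.
  intros H.
  assert (Hx : -1 <= x <= 1) by nra.
  assert (Hs : sqrt (1 - x²) = Rabs y).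
  { rewrite <- sqrt_Rsqr_abs. f_equal. unfold Rsqr. nra. }
  destruct (Rle_dec 0 y) as [Hy|Hy].
  - exists (acos x). rewrite cos_acos, sin_acos by exact Hx. rewrite Hs, Rabs_right; lra.
  - exists (- acos x). rewrite cos_neg, sin_neg, cos_acos, sin_acos by exact Hx.
    rewrite Hs, Rabs_left; lra.
Qed.

Lemma ell_ineq g1 g2 w1 w2 c1 c2 :
  r2f g1 g2 < 1 -> Qf g1 g2 w1 w2 = Af g1 g2 * b2f g1 g2 ->
  (w1*c1+w2*c2)^2 <= b2f g1 g2*(c1^2+c2^2) + (c1*g1+c2*g2)^2.
Proof.
  unfold Qf, Af, b2f, r2f. intros H1 HQ.
  set (A := (1 + (g1^2+g2^2))/2) in *.
  set (b := (1 - (g1^2+g2^2))/2) in *.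
  assert (HA : A = b + (g1^2+g2^2)) by (unfold A, b; field).
  assert (Hb : 0 < b) by (unfold b; lra).
  assert (HA0 : 0 < A) by (unfold A; nra).
  set (h := b*(c1^2+c2^2) + (c1*g1+c2*g2)^2).
  set (S := b*(c1*w2-c2*w1)+(c1*g1+c2*g2)*(g1*w2-g2*w1)).
  assert (Hid : h*(A * (w1^2+w2^2) - (w1*g1+w2*g2)^2) - A*b*(w1*c1+w2*c2)^2 = S^2).
  { unfold h, S. rewrite HA. ring. }
  rewrite HQ in Hid.
  assert (0 <= S^2) by nra.
  assert (0 < A*b) by nra.
  nra.
Qed.

Lemma ell_disc g1 g2 w1 w2 :
  r2f g1 g2 < 1 -> Qf g1 g2 w1 w2 = Af g1 g2 * b2f g1 g2 -> w1^2+w2^2 < 1.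
Proof.
  unfold Qf, Af, b2f, r2f. intros H1 HQ.
  assert (Hcs : (w1*g1+w2*g2)^2 + (g1*w2-g2*w1)^2 = (g1^2+g2^2)*(w1^2+w2^2)) by ring.
  assert (0 <= (g1*w2-g2*w1)^2) by apply pow2_ge_0.
  assert (0 <= g1^2+g2^2) by (generalize (pow2_ge_0 g1) (pow2_ge_0 g2); lra).
  set (W := w1^2+w2^2) in *. set (r := g1^2+g2^2) in *.
  set (P := (w1*g1+w2*g2)^2) in *.
  assert (Hb: (1-r)/2 * W <= (1+r)/2 * ((1-r)/2)) by nra.
  assert (W <= (1+r)/2).
  { apply Rmult_le_reg_l with ((1-r)/2). lra. nra. }
  lra.
Qed.

Lemma tangency g1 g2 u1 u2 v1 v2 :
  u1^2+u2^2 = 1 -> v1^2+v2^2 = 1 -> Rrel g1 g2 u1 u2 v1 v2 ->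
  b2f g1 g2 * ((v2-u2)^2+(u1-v1)^2) + ((v2-u2)*g1+(u1-v1)*g2)^2 = (u1*v2-u2*v1)^2.
Proof.
  unfold Rrel, b2f, r2f. intros hU hV hR.
  set (k1 := g1^2-g2^2) in *. set (k2 := 2*g1*g2) in *.
  set (eU := u1^2+u2^2-1). set (eV := v1^2+v2^2-1).
  set (eR := u1*v1+u2*v2 - (k1*(u1*v1-u2*v2) + k2*(u1*v2+u2*v1))).
  set (ga := u1*v1+u2*v2).
  set (ku := k1*(u1^2-u2^2) + k2*(2*u1*u2)).
  set (kv := k1*(v1^2-v2^2) + k2*(2*v1*v2)).
  assert (Hid : 2*((1 - (g1^2+g2^2))/2 * ((v2-u2)^2+(u1-v1)^2) + ((v2-u2)*g1+(u1-v1)*g2)^2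
                 - (u1*v2-u2*v1)^2)
     = eU + eV - 2*eU - 2*eV - 2*eU*eV + 2*ga*eR + ku*eV + kv*eU - 2*eR).
  { unfold eU, eV, eR, ga, ku, kv, k1, k2. field. }
  assert (eU = 0) by (unfold eU; lra).
  assert (eV = 0) by (unfold eV; lra).
  assert (eR = 0) by (unfold eR; lra).
  assert (Hz : 2*((1 - (g1^2+g2^2))/2 * ((v2-u2)^2+(u1-v1)^2) + ((v2-u2)*g1+(u1-v1)*g2)^2
                 - (u1*v2-u2*v1)^2) = 0).
  { rewrite Hid. repeat match goal with H : ?e = 0 |- _ => rewrite H; clear H end. ring. }
  lra.
Qed.

Lemma Rrel_swap g1 g2 u1 u2 v1 v2 : Rrel g1 g2 u1 u2 v1 v2 -> Rrel g1 g2 v1 v2 (-u1) (-u2).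
Proof. unfold Rrel. intros H. lra. Qed.

Lemma tangency2 g1 g2 u1 u2 v1 v2 :
  u1^2+u2^2 = 1 -> v1^2+v2^2 = 1 -> Rrel g1 g2 u1 u2 v1 v2 ->
  b2f g1 g2 * ((-u2-v2)^2+(v1+u1)^2) + ((-u2-v2)*g1+(v1+u1)*g2)^2 = (u1*v2-u2*v1)^2.
Proof.
  intros hU hV hR.
  assert (hU' : (-u1)^2+(-u2)^2 = 1) by lra.
  pose proof (tangency g1 g2 v1 v2 (-u1) (-u2) hV ltac:(nra) (Rrel_swap _ _ _ _ _ _ hR)) as T.
  replace (b2f g1 g2 * ((-u2-v2)^2+(v1+u1)^2) + ((-u2-v2)*g1+(v1+u1)*g2)^2)
    with (b2f g1 g2 * ((- u2 - v2) ^ 2 + (v1 - - u1) ^ 2) + ((- u2 - v2) * g1 + (v1 - - u1) * g2) ^ 2)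
    by ring.
  rewrite T. ring.
Qed.

Lemma fun_bound g1 g2 u1 u2 v1 v2 w1 w2 :
  r2f g1 g2 < 1 ->
  u1^2+u2^2 = 1 -> v1^2+v2^2 = 1 -> Rrel g1 g2 u1 u2 v1 v2 ->
  u1*v2-u2*v1 <> 0 -> Qf g1 g2 w1 w2 = Af g1 g2 * b2f g1 g2 ->
  let D := u1*v2-u2*v1 in
  let x := (w1*v2 - w2*v1)/D in let y := (u1*w2-u2*w1)/D in
  (x+y)^2 <= 1 /\ (y-x)^2 <= 1.
Proof.
  intros Hr hU hV hR HD HQ D x y.
  assert (HD2 : 0 < D^2) by (unfold D; nra).
  pose proof (ell_ineq g1 g2 w1 w2 (v2-u2) (u1-v1) Hr HQ) as I1.
  pose proof (ell_ineq g1 g2 w1 w2 (-u2-v2) (v1+u1) Hr HQ) as I2.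
  rewrite (tangency _ _ _ _ _ _ hU hV hR) in I1.
  rewrite (tangency2 _ _ _ _ _ _ hU hV hR) in I2.
  fold D in I1, I2.
  assert (E1 : x + y = (w1*(v2-u2)+w2*(u1-v1))/D) by (unfold x, y; field; exact HD).
  assert (E2 : y - x = (w1*(-u2-v2)+w2*(v1+u1))/D) by (unfold x, y; field; exact HD).
  rewrite E1, E2. split.
  - replace (((w1*(v2-u2)+w2*(u1-v1))/D)^2) with ((w1*(v2-u2)+w2*(u1-v1))^2 / D^2) by (field; exact HD).
    apply Rmult_le_reg_r with (D^2); [exact HD2|]. unfold Rdiv. rewrite Rmult_assoc, Rinv_l by lra. lra.
  - replace (((w1*(-u2-v2)+w2*(v1+u1))/D)^2) with ((w1*(-u2-v2)+w2*(v1+u1))^2 / D^2) by (field; exact HD).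
    apply Rmult_le_reg_r with (D^2); [exact HD2|]. unfold Rdiv. rewrite Rmult_assoc, Rinv_l by lra. lra.
Qed.

Lemma coords u1 u2 v1 v2 w1 w2 :
  u1*v2-u2*v1 <> 0 ->
  let D := u1*v2-u2*v1 in
  let x := (w1*v2 - w2*v1)/D in let y := (u1*w2-u2*w1)/D in
  w1 = x*u1 + y*v1 /\ w2 = x*u2 + y*v2.
Proof. intros HD D x y. unfold x, y, D. split; field; exact HD. Qed.

Lemma side_real g1 g2 u1 u2 v1 v2 :
  r2f g1 g2 < 1 ->
  u1^2+u2^2 = 1 -> v1^2+v2^2 = 1 -> Rrel g1 g2 u1 u2 v1 v2 ->
  u1*v2-u2*v1 <> 0 ->
  exists w1 w2 s, Qf g1 g2 w1 w2 = Af g1 g2 * b2f g1 g2 /\ 0 <= s <= 1 /\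
    w1 = u1 + s*(v1-u1) /\ w2 = u2 + s*(v2-u2).
Proof.
  intros Hr hU hV hR HD.
  set (D := u1*v2-u2*v1) in *.
  set (b := b2f g1 g2).
  set (cd := (v2-u2)*g1+(u1-v1)*g2).
  pose proof (tangency _ _ _ _ _ _ hU hV hR) as T. fold b cd D in T.
  set (w1 := (b*(v2-u2) + cd*g1)/D).
  set (w2 := (b*(u1-v1) + cd*g2)/D).
  assert (HQ : Qf g1 g2 w1 w2 = Af g1 g2 * b2f g1 g2).
  { assert (Hq : Qf g1 g2 w1 w2 = Af g1 g2 * b * (b*((v2-u2)^2+(u1-v1)^2) + cd^2) / D^2).
    { unfold Qf, w1, w2, cd, b, b2f, Af, r2f. field. exact HD. }
    rewrite Hq, T. fold b. field. exact HD. }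
  destruct (fun_bound g1 g2 u1 u2 v1 v2 w1 w2 Hr hU hV hR HD HQ) as [B1 B2].
  destruct (coords u1 u2 v1 v2 w1 w2 HD) as [C1 C2].
  fold D in B1, B2, C1, C2.
  set (x := (w1*v2 - w2*v1)/D) in *. set (y := (u1*w2-u2*w1)/D) in *.
  assert (Hxy : x + y = 1).
  { unfold x, y.
    replace ((w1 * v2 - w2 * v1) / D + (u1 * w2 - u2 * w1) / D)
      with ((b*((v2-u2)^2+(u1-v1)^2) + cd^2)/D^2) by (unfold w1, w2, cd; field; exact HD).
    rewrite T. field. exact HD. }
  exists w1, w2, y. split; [exact HQ|]. split; [nra|]. split.
  - rewrite C1 at 1. replace x with (1-y) by lra. ring.
  - rewrite C2 at 1. replace x with (1-y) by lra. ring.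
Qed.

Lemma ell_wA g1 g2 w1 w2 :
  r2f g1 g2 < 1 -> Qf g1 g2 w1 w2 = Af g1 g2 * b2f g1 g2 -> w1^2+w2^2 <= Af g1 g2.
Proof.
  unfold Qf, Af, b2f, r2f. intros H1 HQ.
  assert (Hcs : (w1*g1+w2*g2)^2 + (g1*w2-g2*w1)^2 = (g1^2+g2^2)*(w1^2+w2^2)) by ring.
  assert (0 <= (g1*w2-g2*w1)^2) by apply pow2_ge_0.
  assert (0 <= g1^2+g2^2) by (generalize (pow2_ge_0 g1) (pow2_ge_0 g2); lra).
  set (W := w1^2+w2^2) in *. set (r := g1^2+g2^2) in *.
  set (P := (w1*g1+w2*g2)^2) in *.
  assert (Hb: (1-r)/2 * W <= (1+r)/2 * ((1-r)/2)) by nra.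
  apply Rmult_le_reg_l with ((1-r)/2). lra. nra.
Qed.

Lemma focal g1 g2 w1 w2 :
  r2f g1 g2 < 1 ->
  (sqrt ((w1-g1)^2+(w2-g2)^2) + sqrt ((w1+g1)^2+(w2+g2)^2) = 2 * sqrt (Af g1 g2)
   <-> Qf g1 g2 w1 w2 = Af g1 g2 * b2f g1 g2).
Proof.
  intros Hr.
  assert (Hr0 : 0 <= r2f g1 g2) by (unfold r2f; generalize (pow2_ge_0 g1) (pow2_ge_0 g2); lra).
  assert (HA : 0 < Af g1 g2) by (unfold Af; lra).
  set (a := sqrt (Af g1 g2)).
  assert (Ha : 0 < a) by (apply sqrt_lt_R0; exact HA).
  assert (Ha2 : a * a = Af g1 g2) by (apply sqrt_sqrt; lra).
  set (P := w1*g1+w2*g2).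
  assert (X1e : (w1-g1)^2+(w2-g2)^2 = (w1^2+w2^2) + r2f g1 g2 - 2*P) by (unfold P, r2f; ring).
  assert (X2e : (w1+g1)^2+(w2+g2)^2 = (w1^2+w2^2) + r2f g1 g2 + 2*P) by (unfold P, r2f; ring).
  assert (Hb : b2f g1 g2 = Af g1 g2 - r2f g1 g2) by (unfold b2f, Af; field).
  unfold Qf. fold P.
  split.
  - intros Hs.
    set (d1 := sqrt ((w1-g1)^2+(w2-g2)^2)) in *.
    set (d2 := sqrt ((w1+g1)^2+(w2+g2)^2)) in *.
    assert (Hd1 : d1*d1 = (w1^2+w2^2) + r2f g1 g2 - 2*P).
    { unfold d1. rewrite sqrt_sqrt; [lra|]. rewrite X1e in *. 
      generalize (pow2_ge_0 (w1-g1)) (pow2_ge_0 (w2-g2)); lra. }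
    assert (Hd2 : d2*d2 = (w1^2+w2^2) + r2f g1 g2 + 2*P).
    { unfold d2. rewrite sqrt_sqrt; [lra|].
      generalize (pow2_ge_0 (w1+g1)) (pow2_ge_0 (w2+g2)); lra. }
    assert (Hdiff : (d1 - d2) * (2*a) = -4*P).
    { rewrite <- Hs. replace ((d1 - d2) * (d1 + d2)) with (d1*d1 - d2*d2) by ring.
      rewrite Hd1, Hd2. ring. }
    assert (Hd1a : d1 * a = a*a - P).
    { assert (d1 * (2*a) = (d1+d2)*a + (d1-d2)*a) by ring.
      assert ((d1 - d2) * a = -2*P) by lra. rewrite Hs in H. lra. }
    assert (Hsq : (d1*a)*(d1*a) = (a*a-P)*(a*a-P)) by (rewrite Hd1a; ring).
    replace ((d1*a)*(d1*a)) with ((d1*d1)*(a*a)) in Hsq by ring.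
    rewrite Hd1, Ha2 in Hsq. rewrite Hb. nra.
  - intros HQ.
    assert (HwA : w1^2+w2^2 <= Af g1 g2) by (exact (ell_wA g1 g2 w1 w2 Hr HQ)).
    assert (HP2 : P^2 <= r2f g1 g2 * (w1^2+w2^2)).
    { unfold P, r2f. assert (Hcs : (w1*g1+w2*g2)^2 + (g1*w2-g2*w1)^2 = (g1^2+g2^2)*(w1^2+w2^2)) by ring.
      generalize (pow2_ge_0 (g1*w2-g2*w1)); lra. }
    assert (HrA : r2f g1 g2 < Af g1 g2) by (unfold Af; lra).
    assert (HPA : P^2 < Af g1 g2 ^ 2).
    { assert (r2f g1 g2 * (w1^2+w2^2) <= r2f g1 g2 * Af g1 g2) by (apply Rmult_le_compat_l; lra).
      assert (r2f g1 g2 * Af g1 g2 < Af g1 g2 * Af g1 g2) by (apply Rmult_lt_compat_r; lra).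
      lra. }
    assert (HPl : - Af g1 g2 < P < Af g1 g2) by nra.
    assert (E1 : sqrt ((w1-g1)^2+(w2-g2)^2) = (Af g1 g2 - P)/a).
    { apply sqrt_lem_1.
      - generalize (pow2_ge_0 (w1-g1)) (pow2_ge_0 (w2-g2)); lra.
      - unfold Rdiv; apply Rmult_le_pos; [lra| left; apply Rinv_0_lt_compat; lra].
      - rewrite X1e. field_simplify; [|lra]. rewrite <- Ha2.
        rewrite Hb in HQ. rewrite <- Ha2 in HQ. field_simplify in HQ. 
        apply (Rmult_eq_reg_r (a*a)); [|nra]. field_simplify; [|lra]. nra. }
    assert (E2 : sqrt ((w1+g1)^2+(w2+g2)^2) = (Af g1 g2 + P)/a).
    { apply sqrt_lem_1.
      - generalize (pow2_ge_0 (w1+g1)) (pow2_ge_0 (w2+g2)); lra.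
      - unfold Rdiv; apply Rmult_le_pos; [lra| left; apply Rinv_0_lt_compat; lra].
      - rewrite X2e. field_simplify; [|lra]. rewrite <- Ha2.
        rewrite Hb in HQ. rewrite <- Ha2 in HQ. field_simplify in HQ.
        apply (Rmult_eq_reg_r (a*a)); [|nra]. field_simplify; [|lra]. nra. }
    rewrite E1, E2. rewrite <- Ha2. field. lra.
Qed.

Lemma C_ext (a b : C) : fst a = fst b -> snd a = snd b -> a = b.
Proof. destruct a, b; simpl; intros; subst; reflexivity. Qed.

Lemma Cmod_unit (u : C) : Cmod u = 1 -> fst u ^ 2 + snd u ^ 2 = 1.
Proof.
  unfold Cmod. intros H.
  rewrite <- (sqrt_sqrt (fst u ^ 2 + snd u ^ 2)).
  - rewrite H. ring.
  - generalize (pow2_ge_0 (fst u)) (pow2_ge_0 (snd u)); lra.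
Qed.

Lemma unit_Cmod (u : C) : fst u ^ 2 + snd u ^ 2 = 1 -> Cmod u = 1.
Proof. unfold Cmod. intros H. rewrite H. apply sqrt_1. Qed.

Definition Ell (g : C) : C -> Prop := fun w =>
  Cmod (Cminus w g) + Cmod (Cminus w (Copp g)) = 2 * sqrt (Af (fst g) (snd g)).

Lemma Ell_iff g w : r2f (fst g) (snd g) < 1 ->
  (Ell g w <-> Qf (fst g) (snd g) (fst w) (snd w) = Af (fst g) (snd g) * b2f (fst g) (snd g)).
Proof.
  intros Hr. rewrite <- focal by exact Hr.
  destruct g as [g1 g2], w as [w1 w2]. unfold Ell, Cmod, Cminus, Copp, Cplus. simpl.
  replace (w1 + - g1) with (w1 - g1) by ring.
  replace (w2 + - g2) with (w2 - g2) by ring.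
  replace (w1 + - - g1) with (w1 + g1) by ring.
  replace (w2 + - - g2) with (w2 + g2) by ring.
  tauto.
Qed.

Definition RrelC (g u v : C) := Rrel (fst g) (snd g) (fst u) (snd u) (fst v) (snd v).
Definition DC (u v : C) := fst u * snd v - snd u * fst v.

Lemma side_C g p q : r2f (fst g) (snd g) < 1 -> Cmod p = 1 -> Cmod q = 1 ->
  RrelC g p q -> DC p q <> 0 -> exists w, Ell g w /\ on_segment p q w.
Proof.
  intros Hr Hp Hq HR HD.
  apply Cmod_unit in Hp. apply Cmod_unit in Hq.
  destruct (side_real (fst g) (snd g) (fst p) (snd p) (fst q) (snd q) Hr Hp Hq HR HD)
    as (w1 & w2 & s & HQ & Hs & E1 & E2).
  exists (w1, w2). split.
  - apply Ell_iff; [exact Hr|]. exact HQ.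
  - exists s. split; [exact Hs|]. destruct p as [p1 p2], q as [q1 q2]. simpl in *.
    apply C_ext; simpl; rewrite ?E1, ?E2; ring.
Qed.

Lemma hull_C g u v w : r2f (fst g) (snd g) < 1 -> Cmod u = 1 -> Cmod v = 1 ->
  RrelC g u v -> DC u v <> 0 -> Ell g w ->
  in_polygon_hull 4 (quad u v (Copp u) (Copp v)) w.
Proof.
  intros Hr Hu Hv HR HD Hw.
  apply Cmod_unit in Hu. apply Cmod_unit in Hv.
  apply (Ell_iff g w Hr) in Hw.
  destruct (fun_bound _ _ _ _ _ _ _ _ Hr Hu Hv HR HD Hw) as [B1 B2].
  destruct (coords (fst u) (snd u) (fst v) (snd v) (fst w) (snd w) HD) as [C1 C2].
  set (D := fst u * snd v - snd u * fst v) in *.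
  set (x := (fst w * snd v - snd w * fst v) / D) in *.
  set (y := (fst u * snd w - snd u * fst w) / D) in *.
  assert (Hxy : Rabs x + Rabs y <= 1).
  { idtac. match goal with |- _ => idtac end. assert (-1 <= x+y <= 1) by (clear -B1; nra). assert (-1 <= y-x <= 1) by nra.
    unfold Rabs. destruct (Rcase_abs x), (Rcase_abs y); lra. }
  set (s := (1 - Rabs x - Rabs y)/4).
  exists (fun j => match j with
                   | 0%nat => (x + Rabs x)/2 + s
                   | 1%nat => (y + Rabs y)/2 + s
                   | 2%nat => (Rabs x - x)/2 + s
                   | _ => (Rabs y - y)/2 + s end).
  assert (Ax : Rabs x = x \/ Rabs x = - x) by (unfold Rabs; destruct (Rcase_abs x); lra).
  assert (Ay : Rabs y = y \/ Rabs y = - y) by (unfold Rabs; destruct (Rcase_abs y); lra).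
  assert (0 <= s) by (unfold s; lra).
  split; [|split].
  - intros j Hj.
    assert (x <= Rabs x) by apply Rle_abs. assert (y <= Rabs y) by apply Rle_abs.
    assert (-x <= Rabs x) by (rewrite <- Rabs_Ropp; apply Rle_abs).
    assert (-y <= Rabs y) by (rewrite <- Rabs_Ropp; apply Rle_abs).
    destruct j as [|[|[|j]]]; lra.
  - simpl. unfold s. field.
  - clearbody s x y D. destruct u as [u1 u2], v as [v1 v2], w as [w1 w2]. simpl in *.
    apply C_ext; simpl.
    + rewrite C1 at 1. destruct Ax as [Ax|Ax]; rewrite Ax; field.
    + rewrite C2 at 1. destruct Ax as [Ax|Ax]; rewrite Ax; field.
Qed.

Lemma inscribed_C g u v : r2f (fst g) (snd g) < 1 -> Cmod u = 1 -> Cmod v = 1 ->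
  RrelC g u v -> DC u v <> 0 ->
  inscribed_in_polygon (Ell g) 4 (quad u v (Copp u) (Copp v)).
Proof.
  intros Hr Hu Hv HR HD. split.
  - intros w Hw. apply (hull_C g u v w); assumption.
  - assert (Hu' : Cmod (Copp u) = 1) by (rewrite Cmod_opp; exact Hu).
    assert (Hv' : Cmod (Copp v) = 1) by (rewrite Cmod_opp; exact Hv).
    unfold RrelC, Rrel, DC in *.
    intros j Hj. destruct j as [|[|[|[|j]]]]; simpl.
    + apply side_C; auto.
    + apply side_C; auto; unfold RrelC, Rrel, DC; simpl; lra.
    + apply side_C; auto; unfold RrelC, Rrel, DC; simpl; lra.
    + apply side_C; auto; unfold RrelC, Rrel, DC; simpl; lra.
    + lia.
Qed.

Definition zl (g : C) : list C := [RtoC 0; RtoC 0; g; Copp g].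
Definition Bg (g : C) : C -> C := blaschke (RtoC 1) (zl g).

Lemma Cmult_eq_0 (a b : C) : (a * b)%C = 0%C -> a = 0%C \/ b = 0%C.
Proof.
  intros H. destruct (classic (a = 0%C)) as [Ha|Ha]; [left; exact Ha|right].
  replace b with (/ a * (a * b))%C by (field; exact Ha). rewrite H. ring.
Qed.

Lemma Cmod_g g : Cmod g = sqrt (r2f (fst g) (snd g)).
Proof. reflexivity. Qed.

Lemma Cmod_g_lt g : r2f (fst g) (snd g) < 1 -> Cmod g < 1.
Proof.
  intros Hr. rewrite Cmod_g. rewrite <- sqrt_1. apply sqrt_lt_1; [|lra|exact Hr].
  unfold r2f. generalize (pow2_ge_0 (fst g)) (pow2_ge_0 (snd g)); lra.
Qed.

Lemma den_nz g w : Cmod g < 1 -> Cmod w = 1 -> (1 - Cconj g * w)%C <> 0%C.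
Proof.
  intros Hg Hw H.
  assert (E : (Cconj g * w)%C = 1%C).
  { replace (Cconj g * w)%C with (1 - (1 - Cconj g * w))%C by ring. rewrite H. ring. }
  apply (f_equal Cmod) in E. rewrite Cmod_mult, Cmod_conj, Hw, Cmod_1 in E. lra.
Qed.

Lemma B_formula g w : r2f (fst g) (snd g) < 1 -> Cmod w = 1 ->
  (Bg g w * ((1 - Cconj g * w) * (1 + Cconj g * w)))%C = (w * w * (w - g) * (w + g))%C.
Proof.
  intros Hr Hw.
  pose proof (Cmod_g_lt g Hr) as Hg.
  assert (H1 : (1 - Cconj g * w)%C <> 0%C) by (apply den_nz; assumption).
  assert (H2 : (1 + Cconj g * w)%C <> 0%C).
  { replace (1 + Cconj g * w)%C with (1 - Cconj (Copp g) * w)%C.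
    - apply den_nz; [rewrite Cmod_opp; exact Hg | exact Hw].
    - apply C_ext; destruct g, w; simpl; ring. }
  assert (E0 : Cconj (RtoC 0) = RtoC 0) by (apply C_ext; simpl; ring).
  assert (E1 : Cconj (Copp g) = Copp (Cconj g)) by (apply C_ext; destruct g; simpl; ring).
  unfold Bg, blaschke, zl, blaschke_prod. rewrite E0, E1.
  unfold Cminus, Cdiv.
  replace (1 + - (- Cconj g * w))%C with (1 + Cconj g * w)%C by ring.
  replace (1 + - (Cconj g * w))%C with (1 - Cconj g * w)%C by ring.
  field. split; [exact H2 | exact H1].
Qed.

Lemma RprimeC g u v : Cmod u = 1 -> Cmod v = 1 -> RrelC g u v ->
  (u*u + v*v = g*g + Cconj g * Cconj g * (u*u*(v*v)))%C.
Proof.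
  intros Hu Hv HR. apply Cmod_unit in Hu. apply Cmod_unit in Hv.
  destruct g as [g1 g2], u as [u1 u2], v as [v1 v2]. unfold RrelC, Rrel in HR. simpl in *.
  set (eU := u1^2+u2^2-1). set (eV := v1^2+v2^2-1).
  set (eR := u1*v1+u2*v2 - ((g1^2-g2^2)*(u1*v1-u2*v2) + (2*g1*g2)*(u1*v2+u2*v1))).
  assert (ZU : eU = 0) by (unfold eU; lra).
  assert (ZV : eV = 0) by (unfold eV; lra).
  assert (ZR : eR = 0) by (unfold eR; lra).
  apply C_ext; simpl.
  - match goal with |- ?L = ?R => assert (HC : L - R =
      2*(u1*v1-u2*v2)*eR - (u1^2-u2^2)*eV - (v1^2-v2^2)*eU + (g1^2-g2^2)*(eU+eV+eU*eV))
      by (unfold eU, eV, eR; field) end.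
    rewrite ZU, ZV, ZR in HC. lra.
  - match goal with |- ?L = ?R => assert (HC : L - R =
      2*(u1*v2+u2*v1)*eR - (2*u1*u2)*eV - (2*v1*v2)*eU + (2*g1*g2)*(eU+eV+eU*eV))
      by (unfold eU, eV, eR; field) end.
    rewrite ZU, ZV, ZR in HC. lra.
Qed.

Lemma preimage g u v lam w : r2f (fst g) (snd g) < 1 -> Cmod u = 1 -> Cmod v = 1 ->
  RrelC g u v -> lam = Copp (u*u*(v*v))%C -> Cmod w = 1 ->
  (Bg g w = lam <-> w = u \/ w = v \/ w = Copp u \/ w = Copp v).
Proof.
  intros Hr Hu Hv HR Hl Hw.
  pose proof (RprimeC g u v Hu Hv HR) as HP.
  pose proof (B_formula g w Hr Hw) as HB.
  pose proof (Cmod_g_lt g Hr) as Hg.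
  assert (H1 : (1 - Cconj g * w)%C <> 0%C) by (apply den_nz; assumption).
  assert (H2 : (1 + Cconj g * w)%C <> 0%C).
  { replace (1 + Cconj g * w)%C with (1 - Cconj (Copp g) * w)%C.
    - apply den_nz; [rewrite Cmod_opp; exact Hg | exact Hw].
    - apply C_ext; destruct g, w; simpl; ring. }
  set (Dn := ((1 - Cconj g * w) * (1 + Cconj g * w))%C) in *.
  assert (HDn : Dn <> 0%C).
  { intros H. apply Cmult_eq_0 in H. tauto. }
  assert (Key : (w * w * (w - g) * (w + g) - lam * Dn
                 = (w - u) * (w + u) * ((w - v) * (w + v)))%C).
  { rewrite Hl. unfold Dn.
    transitivity (w*w*w*w - (g*g + Cconj g * Cconj g * (u*u*(v*v)))*(w*w) + u*u*(v*v))%C.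
    - ring.
    - rewrite <- HP. ring. }
  split.
  - intros HBw. rewrite HBw in HB.
    assert (Z : ((w - u) * (w + u) * ((w - v) * (w + v)))%C = 0%C).
    { rewrite <- Key, <- HB. ring. }
    apply Cmult_eq_0 in Z. destruct Z as [Z|Z]; apply Cmult_eq_0 in Z; destruct Z as [Z|Z].
    + left. replace w with (w - u + u)%C by ring. rewrite Z. ring.
    + right; right; left. replace w with (w + u - u)%C by ring. rewrite Z. ring.
    + right; left. replace w with (w - v + v)%C by ring. rewrite Z. ring.
    + right; right; right. replace w with (w + v - v)%C by ring. rewrite Z. ring.
  - intros Hcases.
    assert (Z : ((w - u) * (w + u) * ((w - v) * (w + v)))%C = 0%C).
    { destruct Hcases as [E|[E|[E|E]]]; rewrite E; ring. }
    rewrite <- Key in Z.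
    assert (E2 : (Bg g w * Dn)%C = (lam * Dn)%C).
    { rewrite HB. replace (w * w * (w - g) * (w + g))%C
        with ((w * w * (w - g) * (w + g) - lam * Dn) + lam * Dn)%C by ring.
      rewrite Z. ring. }
    transitivity (Bg g w * Dn * / Dn)%C; [field; exact HDn|].
    rewrite E2. field. exact HDn.
Qed.

Lemma cs2 x : cos x ^ 2 + sin x ^ 2 = 1.
Proof. pose proof (sin2_cos2 x) as H. unfold Rsqr in H. nra. Qed.

Lemma expi_unit x : Cmod (expi x) = 1.
Proof. apply unit_Cmod. unfold expi. cbn [fst snd]. apply cs2. Qed.

Lemma expi_PI x : expi (x + PI) = Copp (expi x).
Proof. unfold expi. apply C_ext; simpl; [apply neg_cos | apply neg_sin]. Qed.

Lemma poncelet_lambda g lam : r2f (fst g) (snd g) < 1 -> Cmod lam = 1 ->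
  exists z, ordered_preimages (Bg g) lam 4 z /\ inscribed_in_polygon (Ell g) 4 z.
Proof.
  intros Hr Hl.
  pose proof Hl as Hl'. apply Cmod_unit in Hl'.
  destruct (unit_angle _ _ Hl') as [L [HL1 HL2]].
  destruct g as [g1 g2]. simpl in Hr.
  set (k1 := g1^2-g2^2). set (k2 := 2*g1*g2).
  set (S := (L + PI)/2).
  set (ga := k1 * cos S + k2 * sin S).
  assert (Hcs : cos S ^2 + sin S ^2 = 1) by apply cs2.
  assert (Hga : -1 < ga < 1).
  { assert (Hk : k1^2 + k2^2 = (r2f g1 g2)^2) by (unfold k1, k2, r2f; ring).
    assert (Hr0 : 0 <= r2f g1 g2) by (unfold r2f; generalize (pow2_ge_0 g1) (pow2_ge_0 g2); lra).
    assert (Hid : ga^2 + (k1 * sin S - k2 * cos S)^2 = (k1^2+k2^2)*(cos S ^2 + sin S ^2))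
      by (unfold ga; ring).
    rewrite Hcs, Hk in Hid.
    assert (0 <= (k1 * sin S - k2 * cos S)^2) by apply pow2_ge_0.
    assert (ga^2 < 1) by nra. nra. }
  set (d := acos ga).
  destruct (acos_bound_lt ga Hga) as [Hd0 HdP]. fold d in Hd0, HdP.
  assert (Hcd : cos d = ga) by (apply cos_acos; lra).
  assert (Hsd : 0 < sin d) by (apply sin_gt_0; assumption).
  set (s := (S - d)/2). set (t := (S + d)/2).
  assert (Hts : t - s = d) by (unfold t, s; field).
  assert (Hst : s + t = S) by (unfold t, s; field).
  set (u := expi s). set (v := expi t).
  assert (Hu : Cmod u = 1) by apply expi_unit.
  assert (Hv : Cmod v = 1) by apply expi_unit.
  assert (CM : cos (t - s) = cos t * cos s + sin t * sin s) by apply cos_minus.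
  assert (SM : sin (t - s) = sin t * cos s - cos t * sin s) by apply sin_minus.
  assert (CP : cos (s + t) = cos s * cos t - sin s * sin t) by apply cos_plus.
  assert (SP : sin (s + t) = sin s * cos t + cos s * sin t) by apply sin_plus.
  rewrite Hts in CM, SM. rewrite Hst in CP, SP.
  assert (HR : RrelC (g1, g2) u v).
  { unfold RrelC, Rrel, u, v, expi; cbn [fst snd]. fold k1 k2.
    transitivity ga; [lra|]. unfold ga. rewrite CP, SP. ring. }
  assert (HD : DC u v <> 0).
  { unfold DC, u, v, expi; cbn [fst snd]. lra. }
  assert (Huv : (u * v)%C = (cos S, sin S)).
  { unfold u, v, expi. apply C_ext; simpl; lra. }
  assert (Hlam : lam = Copp (u*u*(v*v))%C).
  { replace (u*u*(v*v))%C with ((u*v)*(u*v))%C by ring. rewrite Huv.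
    assert (HL : L = (S + S) - PI) by (unfold S; field).
    destruct lam as [l1 l2]. simpl in HL1, HL2. subst l1 l2.
    rewrite HL. apply C_ext; simpl.
    - rewrite cos_minus, cos_plus, sin_plus, cos_PI, sin_PI. ring.
    - rewrite sin_minus, cos_plus, sin_plus, cos_PI, sin_PI. ring. }
  exists (quad u v (Copp u) (Copp v)). split.
  - exists (fun j : nat => match j with 0%nat => s | 1%nat => t | 2%nat => s + PI | _ => t + PI end).
    split; [|split; [|split]].
    + intros j Hj. destruct j as [|[|[|j]]]; try lra. lia.
    + intros _. simpl. lra.
    + intros j Hj. destruct j as [|[|[|[|j]]]]; simpl; try reflexivity.
      * unfold u. rewrite expi_PI. reflexivity.
      * unfold v. rewrite expi_PI. reflexivity.
      * lia.
    + intros w. split.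
      * intros [Hw HB].
        apply (preimage (g1, g2) u v lam w Hr Hu Hv HR Hlam Hw) in HB.
        destruct HB as [E|[E|[E|E]]].
        -- exists 0%nat. split; [lia|exact E].
        -- exists 1%nat. split; [lia|exact E].
        -- exists 2%nat. split; [lia|exact E].
        -- exists 3%nat. split; [lia|exact E].
      * intros [j [Hj E]].
        assert (Hw : Cmod w = 1).
        { destruct j as [|[|[|[|j]]]]; simpl in E; rewrite E; try rewrite Cmod_opp; auto. }
        split; [exact Hw|].
        apply (preimage (g1, g2) u v lam w Hr Hu Hv HR Hlam Hw).
        destruct j as [|[|[|[|j]]]]; simpl in E; [left|right;left|right;right;left|right;right;right|exfalso; lia]; exact E.
  - apply inscribed_C; auto.
Qed.

Lemma rect_real a1 a2 b1 b2 c1 c2 d1 d2 :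
  a1^2+a2^2 = 1 -> b1^2+b2^2 = 1 -> c1^2+c2^2 = 1 -> d1^2+d2^2 = 1 ->
  d1 = a1 - b1 + c1 -> d2 = a2 - b2 + c2 ->
  ~ (a1 = b1 /\ a2 = b2) -> ~ (c1 = b1 /\ c2 = b2) ->
  a1 + c1 = 0 /\ a2 + c2 = 0.
Proof.
  intros ha hb hc hd E1 E2 nab ncb. subst d1 d2.
  destruct (classic (a1 + c1 = 0 /\ a2 + c2 = 0)) as [Hm|Hm]; [exact Hm|exfalso].
  set (m1 := a1 + c1) in *. set (m2 := a2 + c2) in *.
  set (x1 := a1 - c1). set (x2 := a2 - c2).
  set (y1 := 2*b1 - a1 - c1). set (y2 := 2*b2 - a2 - c2).
  assert (Hmx : m1*x1 + m2*x2 = 0) by (unfold m1, m2, x1, x2; nra).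
  assert (Hmb : m1^2+m2^2 = 2*(m1*b1+m2*b2)) by (unfold m1, m2; nra).
  assert (Hmy : m1*y1 + m2*y2 = 0) by (unfold m1, m2, y1, y2 in *; nra).
  assert (Hxx : x1^2+x2^2 = 4 - (m1^2+m2^2)) by (unfold m1, m2, x1, x2; nra).
  assert (Hyy : y1^2+y2^2 = 4 - (m1^2+m2^2)) by (unfold m1, m2, y1, y2 in *; nra).
  set (P1 := x1 - y1). set (P2 := x2 - y2). set (Q1 := x1 + y1). set (Q2 := x2 + y2).
  assert (HPm : P1*m1 + P2*m2 = 0) by (unfold P1, P2; lra).
  assert (HQm : Q1*m1 + Q2*m2 = 0) by (unfold Q1, Q2; lra).
  set (cr := P1*Q2 - P2*Q1).
  assert (C1 : cr * m1 = Q2*(P1*m1+P2*m2) - P2*(Q1*m1+Q2*m2)) by (unfold cr; ring).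
  assert (C2 : cr * m2 = P1*(Q1*m1+Q2*m2) - Q1*(P1*m1+P2*m2)) by (unfold cr; ring).
  rewrite HPm, HQm in C1, C2.
  assert (Hcr : cr = 0).
  { destruct (Req_dec m1 0) as [Z1|Z1].
    - destruct (Req_dec m2 0) as [Z2|Z2]; [exfalso; apply Hm; split; assumption|].
      apply (Rmult_eq_reg_r m2); [lra|exact Z2].
    - apply (Rmult_eq_reg_r m1); [lra|exact Z1]. }
  assert (HPQ : P1*Q1 + P2*Q2 = 0).
  { assert (P1*Q1 + P2*Q2 = (x1^2+x2^2) - (y1^2+y2^2)) by (unfold P1, P2, Q1, Q2; ring). lra. }
  assert (Hprod : (P1^2+P2^2)*(Q1^2+Q2^2) = 0).
  { assert ((P1^2+P2^2)*(Q1^2+Q2^2) = (P1*Q1 + P2*Q2)^2 + cr^2) by (unfold cr; ring).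
    rewrite HPQ, Hcr in H. lra. }
  apply Rmult_integral in Hprod. destruct Hprod as [Z|Z].
  - assert (P1 = 0 /\ P2 = 0) as [Z1 Z2] by (split; nra).
    apply nab. unfold P1, P2, x1, x2, y1, y2 in *. split; lra.
  - assert (Q1 = 0 /\ Q2 = 0) as [Z1 Z2] by (split; nra).
    apply ncb. unfold Q1, Q2, x1, x2, y1, y2 in *. split; lra.
Qed.

Lemma rect_center (a b c d : C) : Cmod a = 1 -> Cmod b = 1 -> Cmod c = 1 -> Cmod d = 1 ->
  a <> b -> c <> b -> Cminus a b = Cminus d c -> c = Copp a /\ d = Copp b.
Proof.
  intros ha hb hc hd nab ncb E.
  apply Cmod_unit in ha, hb, hc, hd.
  destruct a as [a1 a2], b as [b1 b2], c as [c1 c2], d as [d1 d2]. simpl in *.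
  assert (E1 : d1 = a1 - b1 + c1) by (apply (f_equal fst) in E; simpl in E; lra).
  assert (E2 : d2 = a2 - b2 + c2) by (apply (f_equal snd) in E; simpl in E; lra).
  destruct (rect_real a1 a2 b1 b2 c1 c2 d1 d2 ha hb hc hd E1 E2) as [M1 M2].
  - intros [X Y]. apply nab. subst. reflexivity.
  - intros [X Y]. apply ncb. subst. reflexivity.
  - split; apply C_ext; simpl; lra.
Qed.

Lemma csqrt_ex k1 k2 : exists g1 g2, g1^2 - g2^2 = k1 /\ 2*g1*g2 = k2.
Proof.
  set (m := sqrt (k1^2+k2^2)).
  assert (Hm0 : 0 <= m) by apply sqrt_pos.
  assert (Hm2 : m*m = k1^2+k2^2) by (apply sqrt_sqrt; nra).
  assert (Hk1 : -m <= k1 <= m) by (split; nra).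
  set (g1 := sqrt ((m + k1)/2)). set (h := sqrt ((m - k1)/2)).
  assert (Hg1 : g1 * g1 = (m+k1)/2) by (apply sqrt_sqrt; lra).
  assert (Hh : h * h = (m-k1)/2) by (apply sqrt_sqrt; lra).
  assert (Hg0 : 0 <= g1) by apply sqrt_pos.
  assert (Hh0 : 0 <= h) by apply sqrt_pos.
  assert (Hgh : 2*g1*h = Rabs k2).
  { assert (Hsq : (2*g1*h)^2 = k2^2).
    { replace ((2*g1*h)^2) with (4*(g1*g1)*(h*h)) by ring. rewrite Hg1, Hh. nra. }
    assert (0 <= 2*g1*h) by nra.
    rewrite <- (sqrt_pow2 (2*g1*h)) by lra. rewrite Hsq.
    rewrite <- sqrt_Rsqr_abs. unfold Rsqr. f_equal. ring. }
  destruct (Rle_dec 0 k2) as [Hk2|Hk2].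
  - exists g1, h. split.
    + replace (g1^2 - h^2) with (g1*g1 - h*h) by ring. rewrite Hg1, Hh. field.
    + rewrite Hgh. apply Rabs_right. lra.
  - exists g1, (-h). split.
    + replace (g1^2 - (-h)^2) with (g1*g1 - h*h) by ring. rewrite Hg1, Hh. field.
    + replace (2*g1*(-h)) with (-(2*g1*h)) by ring. rewrite Hgh. rewrite Rabs_left; lra.
Qed.

Lemma Cnz_pos (z : C) : z <> 0%C -> 0 < fst z ^ 2 + snd z ^ 2.
Proof.
  intros Hz. destruct z as [z1 z2]; simpl.
  destruct (Rlt_dec 0 (z1^2+z2^2)) as [H|H]; [exact H|exfalso; apply Hz].
  assert (z1 = 0) by nra. assert (z2 = 0) by nra. subst. reflexivity.
Qed.

Theorem theorem6 (p1 p2 p3 p4 : C) :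
  inscribed_golden_rectangle p1 p2 p3 p4 ->
  exists (E : C -> Prop) (beta : C) (l : list C),
    is_ellipse E /\
    inscribed_in_polygon E 4 (quad p1 p2 p3 p4) /\
    is_blaschke_data 4 beta l /\
    blaschke beta l (RtoC 0) = RtoC 0 /\
    is_poncelet_curve E (blaschke beta l) 4.
Proof.
  intros (H1 & H2 & H3 & H4 & H12 & H32 & Hpar & _ & _).
  destruct (rect_center p1 p2 p3 p4 H1 H2 H3 H4 H12 H32 Hpar) as [E3 E4].
  subst p3 p4.
  assert (Hn1 : Cminus p1 p2 <> 0%C).
  { intros Z. apply H12. replace p1 with (Cminus p1 p2 + p2)%C by (unfold Cminus; ring).
    rewrite Z. ring. }
  assert (Hn2 : (p1 + p2)%C <> 0%C).
  { intros Z. apply H32. replace p2 with (p1 + p2 - p1)%C by ring. rewrite Z. ring. }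
  assert (He : (Cminus p1 p2 * (p1 + p2))%C <> 0%C).
  { intros Z. apply Cmult_eq_0 in Z. tauto. }
  apply Cnz_pos in He.
  pose proof (Cmod_unit _ H1) as U1. pose proof (Cmod_unit _ H2) as U2.
  destruct p1 as [a1 a2], p2 as [b1 b2]. cbn [fst snd] in U1, U2. unfold Cmult, Cminus, Cplus, Copp in He. cbn [fst snd] in He.
  destruct (csqrt_ex (((a1^2-a2^2)+(b1^2-b2^2))/2) (a1*a2+b1*b2)) as (g1 & g2 & Hk1 & Hk2).
  set (g := (g1, g2)).
  assert (Hr : r2f g1 g2 < 1).
  { assert (Hid : (r2f g1 g2)^2 = (g1^2-g2^2)^2 + (2*g1*g2)^2) by (unfold r2f; ring).
    rewrite Hk1, Hk2 in Hid.
    set (e1 := (a1 + - b1) * (a1 + b1) - (a2 + - b2) * (a2 + b2)) in He.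
    set (e2 := (a1 + - b1) * (a2 + b2) + (a2 + - b2) * (a1 + b1)) in He.
    assert (Hid2 : 4*((((a1^2-a2^2)+(b1^2-b2^2))/2)^2 + (a1*a2+b1*b2)^2) + (e1^2+e2^2)
                   = 2*(a1^2+a2^2)^2 + 2*(b1^2+b2^2)^2) by (unfold e1, e2; field).
    rewrite U1, U2 in Hid2.
    assert (Hr0 : 0 <= r2f g1 g2) by (unfold r2f; generalize (pow2_ge_0 g1) (pow2_ge_0 g2); lra).
    nra. }
  assert (HR : RrelC g (a1, a2) (b1, b2)).
  { unfold RrelC, Rrel, g; cbn [fst snd]. rewrite Hk1, Hk2.
    assert (Hc : ((a1 ^ 2 - a2 ^ 2 + (b1 ^ 2 - b2 ^ 2)) / 2 * (a1 * b1 - a2 * b2) +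
                  (a1 * a2 + b1 * b2) * (a1 * b2 + a2 * b1)) - (a1*b1+a2*b2)
                 = ((a1^2+a2^2-1) + (b1^2+b2^2-1))*(a1*b1+a2*b2)/2) by field.
    rewrite U1, U2 in Hc. lra. }
  assert (HD : DC (a1, a2) (b1, b2) <> 0).
  { unfold DC; cbn [fst snd]. intros D0.
    assert (Hid : (a1*b1+a2*b2)^2 + (a1*b2-a2*b1)^2 = (a1^2+a2^2)*(b1^2+b2^2)) by ring.
    rewrite D0, U1, U2 in Hid.
    assert (Hd : a1*b1+a2*b2 = 1 \/ a1*b1+a2*b2 = -1) by (destruct (Rle_dec 0 (a1*b1+a2*b2)); [left|right]; nra).
    destruct Hd as [Hd|Hd].
    - apply H12. assert (a1 = b1) by nra. assert (a2 = b2) by nra. subst. reflexivity.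
    - apply H32. assert (b1 = - a1) by nra. assert (b2 = - a2) by nra. subst.
      apply C_ext; simpl; ring. }
  exists (Ell g), (RtoC 1), (zl g).
  split; [|split; [|split; [|split]]].
  - exists g, (Copp g), (sqrt (Af g1 g2)). split.
    + replace (Cminus g (Copp g)) with (RtoC 2 * g)%C by (unfold Cminus; ring).
      rewrite Cmod_mult, Cmod_R, Rabs_right by lra.
      rewrite Cmod_g. simpl.
      apply Rmult_lt_compat_l; [lra|]. apply sqrt_lt_1.
      * unfold r2f. generalize (pow2_ge_0 g1) (pow2_ge_0 g2); lra.
      * unfold Af, r2f in *. generalize (pow2_ge_0 g1) (pow2_ge_0 g2); lra.
      * unfold Af. lra.
    + intros w. unfold Ell. simpl. tauto.
  - apply inscribed_C; auto.
  - split; [reflexivity|split; [apply Cmod_1|]].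
    unfold zl. repeat constructor.
    + rewrite Cmod_0. lra.
    + rewrite Cmod_0. lra.
    + apply Cmod_g_lt. exact Hr.
    + rewrite Cmod_opp. apply Cmod_g_lt. exact Hr.
  - unfold blaschke, blaschke_prod, zl, Cdiv.
    replace (Cminus (RtoC 0) (RtoC 0)) with (RtoC 0) by (unfold Cminus; ring). ring.
  - split.
    + intros w Hw. apply (Ell_iff g w Hr) in Hw. apply ell_disc in Hw; [|exact Hr].
      unfold Cmod. rewrite <- sqrt_1. apply sqrt_lt_1; [|lra|exact Hw].
      generalize (pow2_ge_0 (fst w)) (pow2_ge_0 (snd w)); lra.
    + intros lam Hl. exact (poncelet_lambda g lam Hr Hl).
Qed.
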